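(* For $m\geq1$ let $T_m$ denote the number of integer sequences $(d_1,\ldots,d_m)$ such that $d_j\in\{1,-3,-4,-5,\ldots\}$ for all $1\leq j\leq m$, $\sum_{j=1}^k d_j\geq 1$ for all $1\leq k\leq m$, and $\sum_{j=1}^m d_j=1$. Then $T_{2M}=o(5^M)$ as $M\to\infty$. *)

(* Defs.v *)
From HB Require Import structures.
From mathcomp Require Import all_boot all_order all_algebra.
Set Implicit Arguments. Unset Strict Implicit. Unset Printing Implicit Defensive.
Import Order.TTheory GRing.Theory Num.Theory.
Local Open Scope ring_scope.

Definition allowed_step (d : int) : bool := (d == 1) || (d <= -3).

Definition admissible (s : seq int) : bool :=
  [&& all allowed_step s,
      all (fun k : nat => 1 <= \sum_(d <- take k s) d) (iota 1 (size s))
    & \sum_(d <- s) d == 1].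

(* Candidate box: every admissible sequence of length m has entries in
   [-m, 1] (the partial sum before step j is <= j-1 <= m-1 and after is >= 1).
   box_vals m = [1; 0; -1; ...; -m]. *)
Definition box_vals (m : nat) : seq int := [seq 1 - k%:Z | k <- iota 0 m.+2].

Fixpoint box_seqs (m n : nat) : seq (seq int) :=
  match n with
  | 0%N => [:: [::]]
  | n'.+1 => [seq x :: s | x <- box_vals m, s <- box_seqs m n']
  end.

Definition T (m : nat) : nat :=
  count (fun s => admissible s) (box_seqs m m).

(* Main.v *)
Require Import Defs.
From HB Require Import structures.
From mathcomp Require Import all_boot all_order all_algebra.
From mathcomp Require Import ring lra.
Import Order.TTheory GRing.Theory Num.Theory.
Local Open Scope ring_scope.

Definition uu : rat := 7%:R / 4%:R.
Definition vv : rat := 4%:R / 7%:R.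

Definition Wt (s : seq int) : rat :=
  (all allowed_step s)%:R * uu ^ (\sum_(d <- s) d).

Definition Gm (m : nat) : rat :=
  \sum_(x <- box_vals m) (allowed_step x)%:R * uu ^ x.

Lemma uu_neq0 : uu != 0.
Proof. by rewrite /uu. Qed.
Lemma uu_ge0 : 0 <= uu.
Proof. rewrite /uu; lra. Qed.
Lemma vv_ge0 : 0 <= vv.
Proof. rewrite /vv; lra. Qed.
Lemma vvn_ge0 k : 0 <= vv ^+ k.
Proof. exact: exprn_ge0 vv_ge0. Qed.

Lemma prod_formula m n :
  \sum_(s <- box_seqs m n) Wt s = Gm m ^+ n.
Proof.
elim: n => [|n IH].
  by rewrite /= big_seq1 /Wt /= big_nil expr0z mulr1 expr0.
have -> : box_seqs m n.+1 = [seq x :: s | x <- box_vals m, s <- box_seqs m n] by [].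
rewrite big_allpairs_dep exprS -IH /Gm big_distrl /=.
apply: eq_bigr => x _; rewrite big_distrr /=.
apply: eq_bigr => s _; rewrite /Wt /= big_cons -mulnb natrM expfzDr ?uu_neq0 //.
by rewrite mulrACA.
Qed.

Lemma count_le_sum (T : Type) (P : pred T) (F : T -> rat) (l : seq T) :
  (forall x, (P x)%:R <= F x) -> (count P l)%:R <= \sum_(x <- l) F x.
Proof.
move=> H; elim: l => [|x l IH]; first by rewrite big_nil.
by rewrite /= big_cons natrD lerD.
Qed.

Lemma T_le_G m : (T m)%:R <= Gm m ^+ m.
Proof.
rewrite -prod_formula /T; apply: count_le_sum => s.
rewrite /Wt; case: (boolP (admissible s)) => [|_].
  case/and3P => -> _ /eqP ->; rewrite expr1z /uu /=. lra.
apply: mulr_ge0; [exact: ler0n | exact: exprz_ge0 uu_ge0].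
Qed.

Definition aa (k : nat) : bool := allowed_step (1 - k%:Z).
Definition SS (N : nat) : rat := \sum_(0 <= k < N) (aa k)%:R * vv ^+ k.

Lemma uu_pow k : uu ^ (1 - k%:Z) = uu * vv ^+ k.
Proof.
rewrite expfzDr ?uu_neq0 // expr1z -exprnN -exprVn.
by congr (_ * (_ ^+ _)); rewrite /uu /vv invf_div.
Qed.

Lemma Gm_SS m : Gm m = uu * SS m.+2.
Proof.
rewrite /Gm /box_vals big_map /SS big_distrr /=.
by apply: eq_bigr => k _; rewrite uu_pow mulrCA.
Qed.

Lemma SS_mono N j : SS N <= SS (N + j).
Proof.
elim: j => [|j IH]; first by rewrite addn0.
rewrite addnS /SS (@big_nat_recr _ _ _ _ 0 _ (leq0n _)); apply: le_trans IH _.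
rewrite lerDl; apply: mulr_ge0; [exact: ler0n | exact: vvn_ge0].
Qed.

Lemma SS4 : SS 4 = 1.
Proof.
have a0 : aa 0 = true by [].
have a1 : aa 1 = false by [].
have a2 : aa 2 = false by [].
have a3 : aa 3 = false by [].
by rewrite /SS !big_nat_recr // big_geq // a0 a1 a2 a3.
Qed.

Lemma SS_inv n : SS (n + 4) + (7%:R/3%:R) * vv ^+ (n + 4) <= 1 + (7%:R/3%:R) * vv ^+ 4.
Proof.
elim: n => [|n IH].
  rewrite add0n SS4; apply: lexx.
have E : SS (n + 4).+1 = SS (n + 4) + (aa (n + 4))%:R * vv ^+ (n + 4).
  by rewrite /SS (@big_nat_recr _ _ _ _ 0 _ (leq0n _)).
rewrite addSn E exprS.
set p := vv ^+ (n + 4) in IH *.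
have hp : 0 <= p by exact: vvn_ge0.
have ha : (aa (n + 4))%:R * p <= p.
  rewrite ler_piMl; [by [] | exact: hp | by case: (aa _)].
set q := vv ^+ 4 in IH *.
set S := SS (n + 4) in IH *.
set a := (aa (n + 4))%:R * p in ha *.
have e : 7%:R/3%:R * (vv * p) = 7%:R/3%:R * p - p.
  by rewrite /vv; field.
rewrite e; clearbody S a p q; move: IH ha hp; clear; lra.
Qed.

Lemma SS_bound N : SS N <= 1 + (7%:R/3%:R) * vv ^+ 4.
Proof.
apply: le_trans (SS_mono N 4) _.
have h1 := SS_inv N; have h2 := vvn_ge0 (N + 4).
move: h1 h2; generalize (SS (N + 4)) (vv ^+ (N + 4)) (vv ^+ 4).
clear; move=> a b c; lra.
Qed.

Lemma SS_ge0 N : 0 <= SS N.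
Proof.
rewrite /SS; apply: sumr_ge0 => k _; apply: mulr_ge0; [exact: ler0n | exact: vvn_ge0].
Qed.

Lemma Gm_bound m : 0 <= Gm m <= 11%:R / 5%:R.
Proof.
rewrite Gm_SS; apply/andP; split.
  exact: mulr_ge0 uu_ge0 (SS_ge0 _).
have H := SS_bound m.+2; have h0 := SS_ge0 m.+2.
have hv : vv ^+ 4 = 256%:R / 2401%:R.
  by rewrite /vv !exprS expr0; field.
rewrite hv in H; move: H h0; generalize (SS m.+2); clear; rewrite /uu => S; lra.
Qed.

Lemma my_bernoulli (d : rat) n : 0 <= d -> 1 + n%:R * d <= (1 + d) ^+ n.
Proof.
move=> hd; elim: n => [|n IH]; first by rewrite mul0r addr0 expr0.
rewrite exprS -natr1.
have h : 0 <= (1 + d) ^+ n by apply: exprn_ge0; lra.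
have h2 : 0 <= n%:R * d by apply: mulr_ge0; [exact: ler0n | exact: hd].
move: IH h h2; set P := _ ^+ n; set Q := n%:R; nra.
Qed.

Lemma pow_step (G : rat) M : 0 <= G <= 11%:R / 5%:R -> G ^+ (2 * M)%N <= (121%:R / 25%:R) ^+ M.
Proof.
case/andP => g0 g1.
have s : G ^+ (2 * M) <= (11%:R / 5%:R) ^+ (2 * M).
  apply: lerXn2r.
  - by rewrite nnegrE.
  - rewrite nnegrE; lra.
  - exact: g1.
apply: le_trans s _.
rewrite exprM.
have -> : (11%:R / 5%:R : rat) ^+ 2 = 121%:R / 25%:R.
  by rewrite expr2; field.
exact: lexx.
Qed.

Lemma fin_step (eps x m B : rat) : 0 < eps -> x * (4%:R * eps) = 121%:R ->
  x <= m -> 1 + m * (4%:R / 121%:R) <= B -> 1 <= eps * B.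
Proof.
move=> he ex hm hB.
have p1 := ler_wpM2l (ltW he) hB.
have p2 := ler_wpM2l (ltW he) hm.
lra.
Qed.

Theorem mainTheorem4 :
  forall eps : rat, 0 < eps ->
  exists M0 : nat, forall M : nat, (M0 <= M)%N ->
    (T (2 * M))%:R <= eps * 5%:R ^+ M.
Proof.
have h121 : 0 <= (121%:R / 25%:R : rat) by lra.
have hd : 0 <= (4%:R / 121%:R : rat) by lra.
move=> eps he.
set x := 121%:R / (4%:R * eps).
have hx : 0 <= x.
  rewrite /x; apply: divr_ge0; [lra | apply: mulr_ge0; lra].
have ex : x * (4%:R * eps) = 121%:R.
  have h4 : (0:rat) < 4%:R by rewrite ltr0n.
  have ne := lt0r_neq0 (mulr_gt0 h4 he).
  by rewrite /x (divfK ne).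
exists (Num.Def.archi_bound x) => M hM.
have hb := archi_boundP hx.
have hMx : x <= M%:R.
  apply: le_trans (ltW hb) _; by rewrite ler_nat.
apply: (le_trans (T_le_G _)).

have P := pow_step _ M (Gm_bound (2 * M)%N).
apply: (le_trans P).
have e5 : (5%:R : rat) ^+ M = (121%:R / 25%:R) ^+ M * (1 + 4%:R / 121%:R) ^+ M.
  by rewrite -exprMn; congr (_ ^+ _); field.
rewrite e5.
have hA := exprn_ge0 M h121.
have h1 : 1 <= eps * (1 + 4%:R / 121%:R) ^+ M.
  have hB' := my_bernoulli _ M hd.
  exact: (fin_step _ _ _ _ he ex hMx hB').
move: h1 hA; generalize ((121%:R / 25%:R : rat) ^+ M) ((1 + 4%:R / 121%:R : rat) ^+ M).
clear => A B h1 hA.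
have := ler_wpM2l hA h1; rewrite mulr1 mulrCA; exact.
Qed.
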